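(* Under Assumption M (together with the decomposition of Assumption D), with $S_{l,r}(\beta_0)$ the Rademacher representation of the score, $E[S_{l,r}(\beta_0)\mid\mathcal J]=0$ for each $l$, and the conditional variance satisfies $$\Omega_{l_1l_2}(\beta_0):=E\big[n\,S_{l_1,r}(\beta_0)S_{l_2,r}(\beta_0)\mid\mathcal J\big]=\Omega^L_{l_1l_2}(\beta_0)+\Omega^H_{l_1l_2}(\beta_0),$$ where $\Omega^L=\Omega^{L,z}+\Omega^{L,a}+\Omega^{L,u}$ with $\Omega^{L,z}_{l_1l_2}=\frac1n\bar z_{(l_1)}'\big[(I-D_P)V(I-D_P)+D_PD_V(I-2D_P)+V\odot P\odot P\big]\bar z_{(l_2)}$, $\Omega^{L,a}_{l_1l_2}=\frac1n a_{(l_1)}'(D_P-P\odot P)a_{(l_2)}$, $\Omega^{L,u}_{l_1l_2}=\frac1n\operatorname{tr}\big(D_{\Sigma^U(l_1,l_2)}D_V(I-D_P)\big)$, and $\Omega^H=\Omega^{H,z}+\Omega^{H,a}+\Omega^{H,u}$ with $\Omega^{H,z}_{l_1l_2}=\frac1n\bar z_{(l_1)}'(V\odot W)\bar z_{(l_2)}$, $\Omega^{H,a}_{l_1l_2}=-\frac2n a_{(l_1)}'(D_P-P\odot P)^2a_{(l_2)}$, $\Omega^{H,u}_{l_1l_2}=-\frac2n\operatorname{tr}\big(D_{\Sigma^U(l_1,l_2)}\big[D_VD_P(I-2D_P)+\big((VD_\varepsilon\odot VD_\varepsilon)(P\odot P)\big)\odot I\big]\big)$, where $V\odot W$ is the $n\times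 n$ matrix with entries, for $i_1\ne i_2$, $[V\odot W]_{i_1i_2}=V_{i_1i_2}\big[(P_{i_1i_1}P_{i_2i_2}+P_{i_1i_2}^2)(3-4P_{i_1i_1}-4P_{i_2i_2})-2P_{i_1i_1}-2P_{i_2i_2}+2(P_{i_1i_1}+P_{i_2i_2})^2\big]$ and diagonal entries $[V\odot W]_{ii}=-2V_{ii}P_{ii}(1-2P_{ii})-2\sum_{j=1}^nV_{ij}^2\varepsilon_j^2P_{ij}^2$.
   Context: Notation: for a vector $v$, $D_v$ is the diagonal matrix with $v$ on its diagonal; for a square matrix $A$, $D_A=A\odot I$ ($\odot$ the Hadamard product); $\iota$ the vector of ones; $D_\varepsilon^2=D_\varepsilon D_\varepsilon$. Linear IV model: $y_i=x_i'\beta_0+\varepsilon_i$, $x_i=\Pi'z_i+\eta_i$, $i=1,\dots,n$, $x_i\in\mathbb R^p$, $z_i\in\mathbb R^k$; $Z$ has rows $z_i'$, $x_{(l)}$ is the $l$th column of the matrix $X$ with rows $x_i'$, $\bar Z=Z\Pi$ with columns $\bar z_{(l)}$, $V=Z(Z'D_\varepsilon^2Z)^{-1}Z'$, $P=D_\varepsilon VD_\varepsilon$, $M=I-P$. The score at $\beta_0$ is $S_l(\beta_0)=-\frac1nx_{(l)}'(I-D_{P\iota})V\varepsilon$. Assumption M: (a) conditional on $Z$, $\{(\varepsilon_i,\eta_i')\}$ are independent, mean zero, with conditional covariance $\Sigma_i=\begin{pmatrix}\sigma_i^2&\sigma_{12i}'\\\sigma_{12i}&\Sigma_{22i}\end{pmatrix}$;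 (b) eigenvalues of $\Sigma_i$ in $[C^{-1},C]$ a.s.; (c) $E[\varepsilon_i^4\mid Z]\le C$, $E[\|\eta_i\|^4\mid Z]\le C$ a.s.; (d) conditional on $Z$, $\varepsilon\overset d=D_r\varepsilon$ with $r=(r_1,\dots,r_n)'$ independent Rademacher variables independent of everything else. Assumption D: $\eta_i=\varepsilon_ia_i+u_i$, $a_i=\sigma_{12i}/\sigma_i^2$, with $\{u_i\}$ and $\{\varepsilon_i\}$ mutually independent given $Z$. Write $a_{(l)}=(a_{1l},\dots,a_{nl})'$, $\bar x_{(l)}=\bar z_{(l)}+u_{(l)}$ (so $x_{(l)}=\bar x_{(l)}+D_\varepsilon a_{(l)}$), and $D_{\Sigma^U(l_1,l_2)}$ the diagonal matrix with $i$th entry $\operatorname{Cov}(u_{il_1},u_{il_2}\mid Z)$. Rademacher representation: $S_{l,r}(\beta_0)=-\frac1n\bar x_{(l)}'VD_\varepsilon r-\frac1n r'D_{a_{(l)}}Pr+\frac1n r'PD_{a_{(l)}}Pr+\frac1n r'PD_rD_{\bar x_{(l)}}VD_\varepsilon r$, which conditionally on $Z$ has the same distribution as $S_l(\beta_0)$. $\mathcal J=\{\varepsilon_i,z_i\}_{i=1}^n$; conditional expectations given $\mathcal J$ are over $r$ and $\{u_i\}$. *)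

(* Defs.v *)
From HB Require Import structures.
From mathcomp Require Import all_boot all_order all_algebra.
From mathcomp Require Import all_classical all_reals all_analysis.
Set Implicit Arguments. Unset Strict Implicit. Unset Printing Implicit Defensive.
Import Order.TTheory GRing.Theory Num.Theory.
Local Open Scope ring_scope.

Section IVScore.
Context {R : realType} {n k p : nat}.

Definition Dvec (v : 'I_n -> R) : 'M[R]_n := diag_mx (\row_i v i).
Definition Dmat (A : 'M[R]_n) : 'M[R]_n := diag_mx (\row_i A i i).
Definition hadm (A B : 'M[R]_n) : 'M[R]_n := \matrix_(i, j) (A i j * B i j).

Definition Vmat (Z : 'M[R]_(n, k)) (eps : 'I_n -> R) : 'M[R]_n :=
  Z *m invmx (Z^T *m (Dvec eps *m Dvec eps) *m Z) *m Z^T.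
Definition Pmat (Z : 'M[R]_(n, k)) (eps : 'I_n -> R) : 'M[R]_n :=
  Dvec eps *m Vmat Z eps *m Dvec eps.

Definition rsign (b : {ffun 'I_n -> bool}) : 'cV[R]_n :=
  \col_i (if b i then 1 else -1).
(* Expectation over r : uniform average over the 2^n sign vectors
   (independent Rademacher coordinates) *)
Definition Er (f : {ffun 'I_n -> bool} -> R) : R :=
  (#|{: {ffun 'I_n -> bool}}|%:R)^-1 * \sum_(b : {ffun 'I_n -> bool}) f b.

(* Rademacher representation S_{l,r}(beta_0), for a realization U of the
   n x p matrix with rows u_i' ; xbar_(l) = zbar_(l) + u_(l), zbar = Z Pi. *)
Definition scoreR (Z : 'M[R]_(n, k)) (eps : 'I_n -> R) (Pi : 'M[R]_(k, p))
  (a : 'M[R]_(n, p)) (U : 'M[R]_(n, p)) (l : 'I_p) (b : {ffun 'I_n -> bool})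
  : R :=
  let V := Vmat Z eps in
  let P := Pmat Z eps in
  let De := Dvec eps in
  let r := rsign b in
  let xb := col l (Z *m Pi) + col l U in
  let Da := Dvec (fun i => a i l) in
  let Dr := Dvec (fun i => r i 0) in
  let Dx := Dvec (fun i => xb i 0) in
  let c := (n%:R)^-1 in
  (- (c *: (xb^T *m V *m De *m r))
   - c *: (r^T *m Da *m P *m r)
   + c *: (r^T *m P *m Da *m P *m r)
   + c *: (r^T *m P *m Dr *m Dx *m V *m De *m r)) 0 0.

Definition VWmat (Z : 'M[R]_(n, k)) (eps : 'I_n -> R) : 'M[R]_n :=
  let V := Vmat Z eps in
  let P := Pmat Z eps in
  \matrix_(i1, i2)
    if i1 == i2 then
      - 2 * V i1 i1 * P i1 i1 * (1 - 2 * P i1 i1)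
      - 2 * \sum_j (V i1 j ^+ 2 * eps j ^+ 2 * P i1 j ^+ 2)
    else
      V i1 i2 * ((P i1 i1 * P i2 i2 + P i1 i2 ^+ 2)
                   * (3 - 4 * P i1 i1 - 4 * P i2 i2)
                 - 2 * P i1 i1 - 2 * P i2 i2
                 + 2 * (P i1 i1 + P i2 i2) ^+ 2).

Definition DSigU (SigU : 'I_n -> 'M[R]_p) (l1 l2 : 'I_p) : 'M[R]_n :=
  Dvec (fun i => SigU i l1 l2).

Definition OmegaLz Z eps (Pi : 'M[R]_(k, p)) (l1 l2 : 'I_p) : R :=
  let V := Vmat Z eps in let P := Pmat Z eps in
  let DP := Dmat P in let DV := Dmat V in
  let zb := Z *m Pi in
  (n%:R)^-1 * ((col l1 zb)^T *m
     ((1%:M - DP) *m V *m (1%:M - DP) + DP *m DV *m (1%:M - 2%:R *: DP)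
      + hadm (hadm V P) P) *m col l2 zb) 0 0.

Definition OmegaLa Z eps (a : 'M[R]_(n, p)) (l1 l2 : 'I_p) : R :=
  let P := Pmat Z eps in
  (n%:R)^-1 * ((col l1 a)^T *m (Dmat P - hadm P P) *m col l2 a) 0 0.

Definition OmegaLu Z eps (SigU : 'I_n -> 'M[R]_p) (l1 l2 : 'I_p) : R :=
  let V := Vmat Z eps in let P := Pmat Z eps in
  (n%:R)^-1 * \tr (DSigU SigU l1 l2 *m Dmat V *m (1%:M - Dmat P)).

Definition OmegaHz Z eps (Pi : 'M[R]_(k, p)) (l1 l2 : 'I_p) : R :=
  let zb := Z *m Pi in
  (n%:R)^-1 * ((col l1 zb)^T *m VWmat Z eps *m col l2 zb) 0 0.

Definition OmegaHa Z eps (a : 'M[R]_(n, p)) (l1 l2 : 'I_p) : R :=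
  let P := Pmat Z eps in
  let Q := Dmat P - hadm P P in
  - (2 / n%:R) * ((col l1 a)^T *m (Q *m Q) *m col l2 a) 0 0.

Definition OmegaHu Z eps (SigU : 'I_n -> 'M[R]_p) (l1 l2 : 'I_p) : R :=
  let V := Vmat Z eps in let P := Pmat Z eps in
  let DP := Dmat P in let DV := Dmat V in
  let VD := V *m Dvec eps in
  - (2 / n%:R) * \tr (DSigU SigU l1 l2 *m
      (DV *m DP *m (1%:M - 2%:R *: DP)
       + hadm (hadm VD VD *m hadm P P) 1%:M)).

Definition OmegaL Z eps Pi a SigU (l1 l2 : 'I_p) : R :=
  OmegaLz Z eps Pi l1 l2 + OmegaLa Z eps a l1 l2 + OmegaLu Z eps SigU l1 l2.
Definition OmegaH Z eps Pi a SigU (l1 l2 : 'I_p) : R :=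
  OmegaHz Z eps Pi l1 l2 + OmegaHa Z eps a l1 l2 + OmegaHu Z eps SigU l1 l2.

End IVScore.

(* Main.v *)
Require Import Defs.
From HB Require Import structures.
From mathcomp Require Import all_boot all_order all_algebra.
From mathcomp Require Import all_classical all_reals all_analysis.
From mathcomp Require Import ring lra.
From mathcomp Require Import measurable_realfun.
Import Order.TTheory GRing.Theory Num.Theory.
Local Open Scope ring_scope.

Set Implicit Arguments. Unset Strict Implicit. Unset Printing Implicit Defensive.
Import GRing.Theory.
Local Open Scope ring_scope.

Section Mom.
Variable R : comRingType.

Definition sg (x : bool) : R := if x then 1 else -1.
Definition lf n (a : 'I_n -> R) (b : {ffun 'I_n -> bool}) : R :=
  \sum_i a i * sg (b i).
Definition ip n (a c : 'I_n -> R) : R := \sum_i a i * c i.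
Definition s4 n (a1 a2 a3 a4 : 'I_n -> R) : R := \sum_i a1 i * a2 i * a3 i * a4 i.
Definition s6 n (a1 a2 a3 a4 a5 a6 : 'I_n -> R) : R :=
  \sum_i a1 i * a2 i * a3 i * a4 i * a5 i * a6 i.
Definition fcons n (x : bool) (b : {ffun 'I_n -> bool}) : {ffun 'I_n.+1 -> bool} :=
  [ffun i => if unlift ord0 i is Some j then b j else x].
Definition fsplit n (b : {ffun 'I_n.+1 -> bool}) : bool * {ffun 'I_n -> bool} :=
  (b ord0, [ffun j => b (lift ord0 j)]).

Lemma sum_split n (F : {ffun 'I_n.+1 -> bool} -> R) :
  \sum_b F b = \sum_b F (fcons true b) + \sum_b F (fcons false b).
Proof.
rewrite (reindex (fun p : bool * {ffun 'I_n -> bool} => fcons p.1 p.2)) /=.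
  by rewrite -(pair_big xpredT xpredT (fun x b => F (fcons x b))) /= big_bool.
exists (@fsplit n) => [[x b] _|b _].
  rewrite /fsplit /fcons ffunE unlift_none; congr pair.
  by apply/ffunP => j; rewrite !ffunE liftK.
rewrite /fsplit /fcons; apply/ffunP => i; rewrite ffunE /=.
by case: unliftP => [j ->|->]; rewrite ?ffunE.
Qed.

Lemma lf_cons n (a : 'I_n.+1 -> R) x b :
  lf a (fcons x b) = a ord0 * sg x + lf (fun j => a (lift ord0 j)) b.
Proof.
rewrite /lf big_ord_recl /fcons ffunE unlift_none; congr (_ + _).
by apply: eq_bigr => j _; rewrite ffunE liftK.
Qed.

Lemma card_sum n : \sum_(b : {ffun 'I_n -> bool}) (1 : R) = (2 ^ n)%:R.
Proof. by rewrite sumr_const card_ffun card_bool card_ord. Qed.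

Lemma exp2 (T : finType) (c1 c2 : R) (X1 X2 : T -> R) :
  \sum_(b : T) (c1 + X1 b) * (c2 + X2 b) =
  c1 * c2 * (\sum_(b : T) 1) + c1 * (\sum_(b : T) X2 b) + c2 * (\sum_(b : T) X1 b) + (\sum_(b : T) X1 b * X2 b).
Proof. by rewrite !mulr_sumr -!big_split; apply: eq_bigr => b _; simpl; ring. Qed.

Lemma prodcons2 n (a1 a2 : 'I_n.+1 -> R) x b :
  lf a1 (fcons x b) * lf a2 (fcons x b) = (a1 ord0 * sg x + lf (fun j => a1 (lift ord0 j)) b) * (a2 ord0 * sg x + lf (fun j => a2 (lift ord0 j)) b).
Proof. by rewrite !lf_cons. Qed.

Lemma exp4 (T : finType) (c1 c2 c3 c4 : R) (X1 X2 X3 X4 : T -> R) :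
  \sum_(b : T) (c1 + X1 b) * (c2 + X2 b) * (c3 + X3 b) * (c4 + X4 b) =
  c1 * c2 * c3 * c4 * (\sum_(b : T) 1) + c1 * c2 * c3 * (\sum_(b : T) X4 b) + c1 * c2 * c4 * (\sum_(b : T) X3 b) + c1 * c2 * (\sum_(b : T) X3 b * X4 b) + c1 * c3 * c4 * (\sum_(b : T) X2 b) + c1 * c3 * (\sum_(b : T) X2 b * X4 b) + c1 * c4 * (\sum_(b : T) X2 b * X3 b) + c1 * (\sum_(b : T) X2 b * X3 b * X4 b) + c2 * c3 * c4 * (\sum_(b : T) X1 b) + c2 * c3 * (\sum_(b : T) X1 b * X4 b) + c2 * c4 * (\sum_(b : T) X1 b * X3 b) + c2 * (\sum_(b : T) X1 b * X3 b * X4 b) + c3 * c4 * (\sum_(b : T) X1 b * X2 b) + c3 * (\sum_(b : T) X1 b * X2 b * X4 b) + c4 * (\sum_(b : T) X1 b * X2 b * X3 b) + (\sum_(b : T) X1 b * X2 b * X3 b * X4 b).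
Proof. by rewrite !mulr_sumr -!big_split; apply: eq_bigr => b _; simpl; ring. Qed.

Lemma prodcons4 n (a1 a2 a3 a4 : 'I_n.+1 -> R) x b :
  lf a1 (fcons x b) * lf a2 (fcons x b) * lf a3 (fcons x b) * lf a4 (fcons x b) = (a1 ord0 * sg x + lf (fun j => a1 (lift ord0 j)) b) * (a2 ord0 * sg x + lf (fun j => a2 (lift ord0 j)) b) * (a3 ord0 * sg x + lf (fun j => a3 (lift ord0 j)) b) * (a4 ord0 * sg x + lf (fun j => a4 (lift ord0 j)) b).
Proof. by rewrite !lf_cons. Qed.

Lemma exp6 (T : finType) (c1 c2 c3 c4 c5 c6 : R) (X1 X2 X3 X4 X5 X6 : T -> R) :
  \sum_(b : T) (c1 + X1 b) * (c2 + X2 b) * (c3 + X3 b) * (c4 + X4 b) * (c5 + X5 b) * (c6 + X6 b) =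
  c1 * c2 * c3 * c4 * c5 * c6 * (\sum_(b : T) 1) + c1 * c2 * c3 * c4 * c5 * (\sum_(b : T) X6 b) + c1 * c2 * c3 * c4 * c6 * (\sum_(b : T) X5 b) + c1 * c2 * c3 * c4 * (\sum_(b : T) X5 b * X6 b) + c1 * c2 * c3 * c5 * c6 * (\sum_(b : T) X4 b) + c1 * c2 * c3 * c5 * (\sum_(b : T) X4 b * X6 b) + c1 * c2 * c3 * c6 * (\sum_(b : T) X4 b * X5 b) + c1 * c2 * c3 * (\sum_(b : T) X4 b * X5 b * X6 b) + c1 * c2 * c4 * c5 * c6 * (\sum_(b : T) X3 b) + c1 * c2 * c4 * c5 * (\sum_(b : T) X3 b * X6 b) + c1 * c2 * c4 * c6 * (\sum_(b : T) X3 b * X5 b) + c1 * c2 * c4 * (\sum_(b : T) X3 b * X5 b * X6 b) + c1 * c2 * c5 * c6 * (\sum_(b : T) X3 b * X4 b) + c1 * c2 * c5 * (\sum_(b : T) X3 b * X4 b * X6 b) + c1 * c2 * c6 * (\sum_(b : T) X3 b * X4 b * X5 b) + c1 * c2 * (\sum_(b : T) X3 b * X4 b * X5 b * X6 b) + c1 * c3 * c4 * c5 * c6 * (\sum_(b : T) X2 b) + c1 * c3 * c4 * c5 * (\sum_(b : T) X2 b * X6 b) + c1 * c3 * c4 * c6 * (\sum_(b : T) X2 b * X5 b) + c1 * c3 * c4 * (\sum_(b : T) X2 b * X5 b * X6 b) + c1 * c3 * c5 * c6 * (\sum_(b : T) X2 b * X4 b) + c1 * c3 * c5 * (\sum_(b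 : T) X2 b * X4 b * X6 b) + c1 * c3 * c6 * (\sum_(b : T) X2 b * X4 b * X5 b) + c1 * c3 * (\sum_(b : T) X2 b * X4 b * X5 b * X6 b) + c1 * c4 * c5 * c6 * (\sum_(b : T) X2 b * X3 b) + c1 * c4 * c5 * (\sum_(b : T) X2 b * X3 b * X6 b) + c1 * c4 * c6 * (\sum_(b : T) X2 b * X3 b * X5 b) + c1 * c4 * (\sum_(b : T) X2 b * X3 b * X5 b * X6 b) + c1 * c5 * c6 * (\sum_(b : T) X2 b * X3 b * X4 b) + c1 * c5 * (\sum_(b : T) X2 b * X3 b * X4 b * X6 b) + c1 * c6 * (\sum_(b : T) X2 b * X3 b * X4 b * X5 b) + c1 * (\sum_(b : T) X2 b * X3 b * X4 b * X5 b * X6 b) + c2 * c3 * c4 * c5 * c6 * (\sum_(b : T) X1 b) + c2 * c3 * c4 * c5 * (\sum_(b : T) X1 b * X6 b) + c2 * c3 * c4 * c6 * (\sum_(b : T) X1 b * X5 b) + c2 * c3 * c4 * (\sum_(b : T) X1 b * X5 b * X6 b) + c2 * c3 * c5 * c6 * (\sum_(b : T) X1 b * X4 b) + c2 * c3 * c5 * (\sum_(b : T) X1 b * X4 b * X6 b) + c2 * c3 * c6 * (\sum_(b : T) X1 b * X4 b * X5 b) + c2 * c3 * (\sum_(b : T) X1 b * X4 b * X5 b * X6 b) + c2 * c4 * c5 * c6 * (\sum_(b : T) X1 b * X3 b) + c2 * c4 * c5 * (\sum_(b : T) X1 b * X3 b * X6 b) + c2 * c4 * c6 * (\sum_(b :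 T) X1 b * X3 b * X5 b) + c2 * c4 * (\sum_(b : T) X1 b * X3 b * X5 b * X6 b) + c2 * c5 * c6 * (\sum_(b : T) X1 b * X3 b * X4 b) + c2 * c5 * (\sum_(b : T) X1 b * X3 b * X4 b * X6 b) + c2 * c6 * (\sum_(b : T) X1 b * X3 b * X4 b * X5 b) + c2 * (\sum_(b : T) X1 b * X3 b * X4 b * X5 b * X6 b) + c3 * c4 * c5 * c6 * (\sum_(b : T) X1 b * X2 b) + c3 * c4 * c5 * (\sum_(b : T) X1 b * X2 b * X6 b) + c3 * c4 * c6 * (\sum_(b : T) X1 b * X2 b * X5 b) + c3 * c4 * (\sum_(b : T) X1 b * X2 b * X5 b * X6 b) + c3 * c5 * c6 * (\sum_(b : T) X1 b * X2 b * X4 b) + c3 * c5 * (\sum_(b : T) X1 b * X2 b * X4 b * X6 b) + c3 * c6 * (\sum_(b : T) X1 b * X2 b * X4 b * X5 b) + c3 * (\sum_(b : T) X1 b * X2 b * X4 b * X5 b * X6 b) + c4 * c5 * c6 * (\sum_(b : T) X1 b * X2 b * X3 b) + c4 * c5 * (\sum_(b : T) X1 b * X2 b * X3 b * X6 b) + c4 * c6 * (\sum_(b : T) X1 b * X2 b * X3 b * X5 b) + c4 * (\sum_(b : T) X1 b * X2 b * X3 b * X5 b * X6 b) + c5 * c6 * (\sum_(b : T) X1 b * X2 b * X3 b * X4 b) + c5 * (\sum_(b : T) X1 b * X2 b * X3 b * X4 b * X6 b) + c6 * (\sum_(b : T) X1 b * X2 b * X3 b * X4 b * X5 b) + (\sum_(b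 : T) X1 b * X2 b * X3 b * X4 b * X5 b * X6 b).
Proof. by rewrite !mulr_sumr -!big_split; apply: eq_bigr => b _; simpl; ring. Qed.

Lemma prodcons6 n (a1 a2 a3 a4 a5 a6 : 'I_n.+1 -> R) x b :
  lf a1 (fcons x b) * lf a2 (fcons x b) * lf a3 (fcons x b) * lf a4 (fcons x b) * lf a5 (fcons x b) * lf a6 (fcons x b) = (a1 ord0 * sg x + lf (fun j => a1 (lift ord0 j)) b) * (a2 ord0 * sg x + lf (fun j => a2 (lift ord0 j)) b) * (a3 ord0 * sg x + lf (fun j => a3 (lift ord0 j)) b) * (a4 ord0 * sg x + lf (fun j => a4 (lift ord0 j)) b) * (a5 ord0 * sg x + lf (fun j => a5 (lift ord0 j)) b) * (a6 ord0 * sg x + lf (fun j => a6 (lift ord0 j)) b).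
Proof. by rewrite !lf_cons. Qed.

Lemma mom2 n (a1 a2 : 'I_n -> R) :
  \sum_(b : {ffun 'I_n -> bool}) lf a1 b * lf a2 b = (2 ^ n)%:R * (ip a1 a2).
Proof.
elim: n a1 a2 => [|n IH] a1 a2.
  rewrite big1 => [|b _]; last by rewrite /lf !big_ord0 !mul0r.
  by rewrite /ip /s4 /s6 !big_ord0 expn0; ring.
rewrite sum_split !(eq_bigr _ (fun b _ => prodcons2 _ _ _ b)) !exp2.
rewrite !IH !card_sum.
rewrite /ip /s4 /s6 !big_ord_recl /= expnS natrM /sg.
set N := (2 ^ n)%:R.
ring.
Qed.

Lemma mom4 n (a1 a2 a3 a4 : 'I_n -> R) :
  \sum_(b : {ffun 'I_n -> bool}) lf a1 b * lf a2 b * lf a3 b * lf a4 b = (2 ^ n)%:R * (ip a1 a2 * ip a3 a4 + ip a1 a3 * ip a2 a4 + ip a1 a4 * ip a2 a3 - 2%:R * (s4 a1 a2 a3 a4)).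
Proof.
elim: n a1 a2 a3 a4 => [|n IH] a1 a2 a3 a4.
  rewrite big1 => [|b _]; last by rewrite /lf !big_ord0 !mul0r.
  by rewrite /ip /s4 /s6 !big_ord0 expn0; ring.
rewrite sum_split !(eq_bigr _ (fun b _ => prodcons4 _ _ _ _ _ b)) !exp4.
rewrite !IH !mom2 !card_sum.
rewrite /ip /s4 /s6 !big_ord_recl /= expnS natrM /sg.
set N := (2 ^ n)%:R.
ring.
Qed.

Lemma mom6 n (a1 a2 a3 a4 a5 a6 : 'I_n -> R) :
  \sum_(b : {ffun 'I_n -> bool}) lf a1 b * lf a2 b * lf a3 b * lf a4 b * lf a5 b * lf a6 b = (2 ^ n)%:R * (ip a1 a2 * ip a3 a4 * ip a5 a6 + ip a1 a2 * ip a3 a5 * ip a4 a6 + ip a1 a2 * ip a3 a6 * ip a4 a5 + ip a1 a3 * ip a2 a4 * ip a5 a6 + ip a1 a3 * ip a2 a5 * ip a4 a6 + ip a1 a3 * ip a2 a6 * ip a4 a5 + ip a1 a4 * ip a2 a3 * ip a5 a6 + ip a1 a4 * ip a2 a5 * ip a3 a6 + ip a1 a4 * ip a2 a6 * ip a3 a5 + ip a1 a5 * ip a2 a3 * ip a4 a6 + ip a1 a5 * ip a2 a4 * ip a3 a6 + ip a1 a5 * ip a2 a6 * ip a3 a4 + ip a1 a6 * ip a2 a3 * ip a4 a5 + ip a1 a6 * ip a2 a4 * ip a3 a5 + ip a1 a6 * ip a2 a5 * ip a3 a4 - 2%:R * (s4 a1 a2 a3 a4 * ip a5 a6) - 2%:R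 * (s4 a1 a2 a3 a5 * ip a4 a6) - 2%:R * (s4 a1 a2 a3 a6 * ip a4 a5) - 2%:R * (s4 a1 a2 a4 a5 * ip a3 a6) - 2%:R * (s4 a1 a2 a4 a6 * ip a3 a5) - 2%:R * (s4 a1 a2 a5 a6 * ip a3 a4) - 2%:R * (s4 a1 a3 a4 a5 * ip a2 a6) - 2%:R * (s4 a1 a3 a4 a6 * ip a2 a5) - 2%:R * (s4 a1 a3 a5 a6 * ip a2 a4) - 2%:R * (s4 a1 a4 a5 a6 * ip a2 a3) - 2%:R * (s4 a2 a3 a4 a5 * ip a1 a6) - 2%:R * (s4 a2 a3 a4 a6 * ip a1 a5) - 2%:R * (s4 a2 a3 a5 a6 * ip a1 a4) - 2%:R * (s4 a2 a4 a5 a6 * ip a1 a3) - 2%:R * (s4 a3 a4 a5 a6 * ip a1 a2) + 16%:R * s6 a1 a2 a3 a4 a5 a6).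
Proof.
elim: n a1 a2 a3 a4 a5 a6 => [|n IH] a1 a2 a3 a4 a5 a6.
  rewrite big1 => [|b _]; last by rewrite /lf !big_ord0 !mul0r.
  by rewrite /ip /s4 /s6 !big_ord0 expn0; ring.
rewrite sum_split !(eq_bigr _ (fun b _ => prodcons6 _ _ _ _ _ _ _ b)) !exp6.
rewrite !IH !mom4 !mom2 !card_sum.
rewrite /ip /s4 /s6 !big_ord_recl /= expnS natrM /sg.
set N := (2 ^ n)%:R.
ring.
Qed.
End Mom.

Section Odd.
Variable R : realFieldType.
Definition fneg n (b : {ffun 'I_n -> bool}) : {ffun 'I_n -> bool} := [ffun i => ~~ b i].

Lemma lf_neg n (a : 'I_n -> R) b : lf a (fneg b) = - lf a b.
Proof.
rewrite /lf -sumrN; apply: eq_bigr => i _; rewrite ffunE /sg.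
by case: (b i) => /=; rewrite ?mulrN ?mulr1 ?opprK.
Qed.

Lemma sum_odd n (F : {ffun 'I_n -> bool} -> R) :
  (forall b, F (fneg b) = - F b) -> \sum_b F b = 0.
Proof.
move=> hF.
have hinj : injective (@fneg n).
  move=> b1 b2 h; apply/ffunP => i; have := congr1 (fun f : {ffun _ -> _} => f i) h.
  by rewrite !ffunE; case: (b1 i); case: (b2 i).
have : \sum_b F b = - \sum_b F b.
  by rewrite {1}(reindex_inj hinj) /= -sumrN; apply: eq_bigr => b _; rewrite hF.
move=> h; lra.
Qed.

Lemma mom1 n (a1 : 'I_n -> R) : \sum_b lf a1 b = 0.
Proof. by apply: sum_odd => b; rewrite !lf_neg. Qed.
Lemma mom3 n (a1 a2 a3 : 'I_n -> R) : \sum_b lf a1 b * lf a2 b * lf a3 b = 0.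
Proof. by apply: sum_odd => b; rewrite !lf_neg; ring. Qed.
Lemma mom5 n (a1 a2 a3 a4 a5 : 'I_n -> R) :
  \sum_b lf a1 b * lf a2 b * lf a3 b * lf a4 b * lf a5 b = 0.
Proof. by apply: sum_odd => b; rewrite !lf_neg; ring. Qed.
End Odd.

Set Implicit Arguments. Unset Strict Implicit. Unset Printing Implicit Defensive.
Local Open Scope ring_scope.

Section Alg.
Variables (R : realType) (n k : nat) (Z : 'M[R]_(n, k)) (eps : 'I_n -> R).
Hypothesis hA : Z^T *m (Dvec eps *m Dvec eps) *m Z \in unitmx.
Local Notation V := (Vmat Z eps).
Local Notation P := (Pmat Z eps).
Local Notation De := (Dvec eps).

Lemma DvecE (v : 'I_n -> R) i j : Dvec v i j = if i == j then v i else 0.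
Proof. by rewrite /Dvec mxE mxE; case: eqP. Qed.

Lemma DeDe : De *m De = Dvec (fun i => eps i ^+ 2).
Proof. rewrite /Dvec mul_mx_diag; apply/matrixP => i j; rewrite !mxE; case: eqP => [->|_]; rewrite ?mulr1n ?mulr0n ?mul0r ?expr2 //. Qed.

Lemma VtrE : V^T = V.
Proof.
rewrite /Vmat !trmx_mul trmxK trmx_inv !trmx_mul trmxK.
by rewrite /Dvec !tr_diag_mx !mulmxA.
Qed.

Lemma Vsym i j : V i j = V j i.
Proof. by rewrite -{1}VtrE mxE. Qed.

Lemma VDV : V *m (De *m De) *m V = V.
Proof.
rewrite /Vmat.
set A := Z^T *m (De *m De) *m Z.
have -> : Z *m invmx A *m Z^T *m (De *m De) *m (Z *m invmx A *m Z^T) =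
   Z *m (invmx A *m A *m invmx A) *m Z^T by rewrite /A !mulmxA.
by rewrite mulVmx // mul1mx.
Qed.

Lemma VDV_gen (W : 'M[R]_n) : W *m (De *m De) *m W = W -> W^T = W ->
  forall i j, \sum_l W i l * W j l * eps l ^+ 2 = W i j.
Proof.
move=> h1 h2 i j.
transitivity ((W *m (De *m De) *m W) i j); last by rewrite h1.
rewrite DeDe mxE; apply: eq_bigr => l _.
rewrite mul_mx_diag !mxE -{2}h2 mxE; ring.
Qed.

Lemma VDV_e i j : \sum_l V i l * V j l * eps l ^+ 2 = V i j.
Proof. exact: VDV_gen VDV VtrE i j. Qed.

Lemma Pentry i j : P i j = eps i * V i j * eps j.
Proof. by rewrite /Pmat /Dvec mul_mx_diag mul_diag_mx !mxE. Qed.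


End Alg.

Section Score.
Variables (R : realType) (n : nat) (eps : 'I_n -> R) (V0 P0 : 'M[R]_n).
Hypothesis P0sym : forall i j, P0 i j = P0 j i.

Definition ev (i : 'I_n) : 'I_n -> R := fun l => if l == i then 1 else 0.
Definition ttg (Pr Mr : 'I_n -> 'I_n -> R) i b :=
  lf (Pr i) b * lf (ev i) b * lf (Mr i) b - lf (Mr i) b.
Definition qqg (Pr : 'I_n -> 'I_n -> R) i b :=
  lf (ev i) b * lf (Pr i) b - lf (Pr i) b * lf (Pr i) b.

Definition Mr0 i : 'I_n -> R := fun l => V0 i l * eps l.
Definition Pr0 i : 'I_n -> R := fun l => P0 i l.

Lemma lf_ev i b : lf (ev i) b = sg R (b i).
Proof.
rewrite /lf (bigD1 i) //= /ev eqxx mul1r big1 ?addr0 // => l /negbTE ->.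
by rewrite mul0r.
Qed.

Lemma rsignE (b : {ffun 'I_n -> bool}) i j : rsign b i j = sg R (b i).
Proof. by rewrite mxE. Qed.

Lemma trsignE (b : {ffun 'I_n -> bool}) i j : (rsign b)^T i j = sg R (b j).
Proof. by rewrite !mxE. Qed.

Lemma T1E (xb : 'cV[R]_n) b :
  (xb^T *m V0 *m Dvec eps *m rsign b) 0 0 = \sum_i xb i 0 * lf (Mr0 i) b.
Proof.
rewrite -!mulmxA mxE; apply: eq_bigr => i _; rewrite !mxE; congr (_ * _).
rewrite /lf; apply: eq_bigr => l _; by rewrite mul_diag_mx !mxE /Mr0 /sg mulrA.
Qed.

Lemma mulDvecE m (X : 'M[R]_(m, n)) (v : 'I_n -> R) i j : (X *m Dvec v) i j = X i j * v j.
Proof. by rewrite /Dvec mul_mx_diag !mxE. Qed.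
Lemma Dvec_mulE m (X : 'M[R]_(n, m)) (v : 'I_n -> R) i j : (Dvec v *m X) i j = v i * X i j.
Proof. by rewrite /Dvec mul_diag_mx !mxE. Qed.

Lemma colP0 b i : (P0 *m rsign b) i 0 = lf (Pr0 i) b.
Proof. by rewrite mxE; apply: eq_bigr => l _; rewrite mxE. Qed.
Lemma rowP0 b i : ((rsign b)^T *m P0) 0 i = lf (Pr0 i) b.
Proof. by rewrite mxE; apply: eq_bigr => l _; rewrite !mxE P0sym /sg mulrC. Qed.
Lemma colM b i : (V0 *m Dvec eps *m rsign b) i 0 = lf (Mr0 i) b.
Proof.
rewrite -mulmxA mxE; apply: eq_bigr => l _.
by rewrite Dvec_mulE mxE /Mr0 /sg mulrA.
Qed.

Lemma T2E (av : 'I_n -> R) b :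
  ((rsign b)^T *m Dvec av *m P0 *m rsign b) 0 0 = \sum_i av i * (lf (ev i) b * lf (Pr0 i) b).
Proof.
rewrite -mulmxA mxE; apply: eq_bigr => i _.
rewrite mulDvecE colP0 lf_ev trsignE; ring.
Qed.

Lemma T3E (av : 'I_n -> R) b :
  ((rsign b)^T *m P0 *m Dvec av *m P0 *m rsign b) 0 0 = \sum_i av i * (lf (Pr0 i) b * lf (Pr0 i) b).
Proof.
rewrite -mulmxA mxE; apply: eq_bigr => i _.
rewrite mulDvecE colP0 rowP0; ring.
Qed.

Lemma T4E (xb : 'cV[R]_n) b :
  ((rsign b)^T *m P0 *m Dvec (fun i => rsign b i 0) *m Dvec (fun i => xb i 0)
     *m V0 *m Dvec eps *m rsign b) 0 0 =
  \sum_i xb i 0 * (lf (Pr0 i) b * lf (ev i) b * lf (Mr0 i) b).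
Proof.
have -> : (rsign b)^T *m P0 *m Dvec (fun i => rsign b i 0) *m Dvec (fun i => xb i 0)
     *m V0 *m Dvec eps *m rsign b =
  ((rsign b)^T *m P0 *m Dvec (fun i => rsign b i 0) *m Dvec (fun i => xb i 0))
     *m (V0 *m Dvec eps *m rsign b) by rewrite !mulmxA.
rewrite mxE; apply: eq_bigr => i _.
rewrite colM !mulDvecE rowP0 lf_ev rsignE; ring.
Qed.

Lemma comb4 (c : R) (A B C D : 'M[R]_1) :
  (- (c *: A) - c *: B + c *: C + c *: D) 0 0 = - (c * A 0 0) - c * B 0 0 + c * C 0 0 + c * D 0 0.
Proof. by rewrite !mxE. Qed.

Lemma score_gen (c : R) (xb : 'cV[R]_n) (av : 'I_n -> R) b :
  (- (c *: (xb^T *m V0 *m Dvec eps *m rsign b))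
   - c *: ((rsign b)^T *m Dvec av *m P0 *m rsign b)
   + c *: ((rsign b)^T *m P0 *m Dvec av *m P0 *m rsign b)
   + c *: ((rsign b)^T *m P0 *m Dvec (fun i => rsign b i 0) *m Dvec (fun i => xb i 0)
     *m V0 *m Dvec eps *m rsign b)) 0 0
  = c * (\sum_i xb i 0 * ttg Pr0 Mr0 i b - \sum_i av i * qqg Pr0 i b).
Proof.
rewrite comb4 T1E T2E T3E T4E /ttg /qqg.
rewrite mulrBr !mulr_sumr -!sumrN -!big_split /=.
apply: eq_bigr => i _; ring.
Qed.
End Score.

Set Implicit Arguments. Unset Strict Implicit. Unset Printing Implicit Defensive.
Local Open Scope ring_scope.

Section Expect.
Variables (R : realType) (n : nat) (eps : 'I_n -> R) (V0 P0 : 'M[R]_n).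
Hypothesis Vs : forall i j, V0 i j = V0 j i.
Hypothesis VDV0 : forall i j, \sum_l V0 i l * V0 j l * eps l ^+ 2 = V0 i j.
Hypothesis Pdef : forall i j, P0 i j = eps i * V0 i j * eps j.

Local Notation Mr := (Mr0 eps V0).
Local Notation Pr := (Pr0 P0).
Local Notation tt := (ttg Pr Mr).
Local Notation qq := (qqg Pr).

Lemma Psym i j : P0 i j = P0 j i.
Proof. by rewrite !Pdef Vs; ring. Qed.

Lemma sum_ev_gen (i : 'I_n) (F : 'I_n -> R) : (forall l, l != i -> F l = 0) -> \sum_l F l = F i.
Proof. by move=> h; rewrite (bigD1 i) //= big1 ?addr0. Qed.

Lemma ip_e1 i (a2 : 'I_n -> R) : ip (ev R i) a2 = a2 i.
Proof. rewrite /ip (@sum_ev_gen i) => [|l hl]; rewrite /ev ?eqxx ?(negbTE hl) /=; ring. Qed.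

Lemma ip_e2 i (a1 : 'I_n -> R) : ip a1 (ev R i) = a1 i.
Proof. rewrite /ip (@sum_ev_gen i) => [|l hl]; rewrite /ev ?eqxx ?(negbTE hl) /=; ring. Qed.

Lemma s4_e1 i (a2 a3 a4 : 'I_n -> R) : s4 (ev R i) a2 a3 a4 = a2 i * a3 i * a4 i.
Proof. rewrite /s4 (@sum_ev_gen i) => [|l hl]; rewrite /ev ?eqxx ?(negbTE hl) /=; ring. Qed.

Lemma s4_e2 i (a1 a3 a4 : 'I_n -> R) : s4 a1 (ev R i) a3 a4 = a1 i * a3 i * a4 i.
Proof. rewrite /s4 (@sum_ev_gen i) => [|l hl]; rewrite /ev ?eqxx ?(negbTE hl) /=; ring. Qed.

Lemma s4_e3 i (a1 a2 a4 : 'I_n -> R) : s4 a1 a2 (ev R i) a4 = a1 i * a2 i * a4 i.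
Proof. rewrite /s4 (@sum_ev_gen i) => [|l hl]; rewrite /ev ?eqxx ?(negbTE hl) /=; ring. Qed.

Lemma s4_e4 i (a1 a2 a3 : 'I_n -> R) : s4 a1 a2 a3 (ev R i) = a1 i * a2 i * a3 i.
Proof. rewrite /s4 (@sum_ev_gen i) => [|l hl]; rewrite /ev ?eqxx ?(negbTE hl) /=; ring. Qed.

Lemma s6_e1 i (a2 a3 a4 a5 a6 : 'I_n -> R) : s6 (ev R i) a2 a3 a4 a5 a6 = a2 i * a3 i * a4 i * a5 i * a6 i.
Proof. rewrite /s6 (@sum_ev_gen i) => [|l hl]; rewrite /ev ?eqxx ?(negbTE hl) /=; ring. Qed.

Lemma s6_e2 i (a1 a3 a4 a5 a6 : 'I_n -> R) : s6 a1 (ev R i) a3 a4 a5 a6 = a1 i * a3 i * a4 i * a5 i * a6 i.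
Proof. rewrite /s6 (@sum_ev_gen i) => [|l hl]; rewrite /ev ?eqxx ?(negbTE hl) /=; ring. Qed.

Lemma s6_e3 i (a1 a2 a4 a5 a6 : 'I_n -> R) : s6 a1 a2 (ev R i) a4 a5 a6 = a1 i * a2 i * a4 i * a5 i * a6 i.
Proof. rewrite /s6 (@sum_ev_gen i) => [|l hl]; rewrite /ev ?eqxx ?(negbTE hl) /=; ring. Qed.

Lemma s6_e4 i (a1 a2 a3 a5 a6 : 'I_n -> R) : s6 a1 a2 a3 (ev R i) a5 a6 = a1 i * a2 i * a3 i * a5 i * a6 i.
Proof. rewrite /s6 (@sum_ev_gen i) => [|l hl]; rewrite /ev ?eqxx ?(negbTE hl) /=; ring. Qed.

Lemma s6_e5 i (a1 a2 a3 a4 a6 : 'I_n -> R) : s6 a1 a2 a3 a4 (ev R i) a6 = a1 i * a2 i * a3 i * a4 i * a6 i.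
Proof. rewrite /s6 (@sum_ev_gen i) => [|l hl]; rewrite /ev ?eqxx ?(negbTE hl) /=; ring. Qed.

Lemma s6_e6 i (a1 a2 a3 a4 a5 : 'I_n -> R) : s6 a1 a2 a3 a4 a5 (ev R i) = a1 i * a2 i * a3 i * a4 i * a5 i.
Proof. rewrite /s6 (@sum_ev_gen i) => [|l hl]; rewrite /ev ?eqxx ?(negbTE hl) /=; ring. Qed.

Lemma ip_MM i j : ip (Mr i) (Mr j) = V0 i j.
Proof. by rewrite -VDV0 /ip; apply: eq_bigr => l _; rewrite /Mr0; ring. Qed.

Lemma ip_MP i j : ip (Mr i) (Pr j) = V0 i j * eps j.
Proof.
rewrite /ip; transitivity (eps j * \sum_l V0 i l * V0 j l * eps l ^+ 2).
  by rewrite mulr_sumr; apply: eq_bigr => l _; rewrite /Mr0 /Pr0 Pdef; ring.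
by rewrite VDV0; ring.
Qed.

Lemma ip_PM i j : ip (Pr i) (Mr j) = V0 i j * eps i.
Proof.
rewrite /ip; transitivity (eps i * \sum_l V0 i l * V0 j l * eps l ^+ 2).
  by rewrite mulr_sumr; apply: eq_bigr => l _; rewrite /Mr0 /Pr0 Pdef; ring.
by rewrite VDV0; ring.
Qed.

Lemma ip_PP i j : ip (Pr i) (Pr j) = P0 i j.
Proof.
rewrite /ip; transitivity (eps i * eps j * \sum_l V0 i l * V0 j l * eps l ^+ 2).
  by rewrite mulr_sumr; apply: eq_bigr => l _; rewrite /Pr0 !Pdef; ring.
by rewrite VDV0 Pdef; ring.
Qed.

Definition MLe i j := (1 - P0 i i) * V0 i j * (1 - P0 j j)
  + (if i == j then P0 i i * V0 i i * (1 - 2%:R * P0 i i) else 0)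
  + V0 i j * P0 i j * P0 i j.
Definition VWe (i1 i2 : 'I_n) : R :=
    if i1 == i2 then
      - 2 * V0 i1 i1 * P0 i1 i1 * (1 - 2 * P0 i1 i1)
      - 2 * \sum_j (V0 i1 j ^+ 2 * eps j ^+ 2 * P0 i1 j ^+ 2)
    else
      V0 i1 i2 * ((P0 i1 i1 * P0 i2 i2 + P0 i1 i2 ^+ 2)
                   * (3 - 4 * P0 i1 i1 - 4 * P0 i2 i2)
                 - 2 * P0 i1 i1 - 2 * P0 i2 i2
                 + 2 * (P0 i1 i1 + P0 i2 i2) ^+ 2).
Definition Kz i j := MLe i j + VWe i j.
Definition dlt (i j : 'I_n) : R := if i == j then 1 else 0.
Definition Qe i j := dlt i j * P0 i i - P0 i j * P0 i j.
Definition Kq i j := Qe i j - 2%:R * \sum_l Qe i l * Qe l j.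

Lemma s4_diag i : s4 (Pr i) (Mr i) (Pr i) (Mr i) =
  \sum_l (V0 i l ^+ 2 * eps l ^+ 2 * P0 i l ^+ 2).
Proof. by apply: eq_bigr => l _; rewrite /Mr0 /Pr0; ring. Qed.

Lemma sum_tt i j : \sum_b tt i b * tt j b = (2 ^ n)%:R * Kz i j.
Proof.
rewrite (eq_bigr (fun b => lf (Pr i) b * lf (ev R i) b * lf (Mr i) b * lf (Pr j) b * lf (ev R j) b * lf (Mr j) b
  - lf (Pr i) b * lf (ev R i) b * lf (Mr i) b * lf (Mr j) b
  - lf (Mr i) b * lf (Pr j) b * lf (ev R j) b * lf (Mr j) b
  + lf (Mr i) b * lf (Mr j) b)); last by move=> b _; rewrite /ttg; ring.
rewrite big_split !sumrB /= mom6 !mom4 mom2.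
rewrite ?s6_e1 ?s6_e2 ?s6_e3 ?s6_e4 ?s6_e5 ?s6_e6 ?s4_e1 ?s4_e2 ?s4_e3 ?s4_e4 ?ip_e1 ?ip_e2.
rewrite ?ip_MM ?ip_MP ?ip_PM ?ip_PP.
set N := (2 ^ n)%:R.
case: (eqVneq i j) => [<-|hij].
  rewrite s4_diag /Kz /MLe /VWe /Mr0 /Pr0 /ev !eqxx /=.
  rewrite (Pdef i i); ring.
rewrite /Kz /MLe /VWe /Mr0 /Pr0 /ev (negbTE hij) ?(eq_sym j i) ?(negbTE hij) /=.
rewrite ?(Pdef i i) ?(Pdef i j) ?(Pdef j i) ?(Pdef j j) (Vs j i); ring.
Qed.

Lemma s4_PPPP i j : s4 (Pr i) (Pr i) (Pr j) (Pr j) = \sum_l P0 i l ^+ 2 * P0 l j ^+ 2.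
Proof. by apply: eq_bigr => l _; rewrite /Pr0 (Psym j l); ring. Qed.

Lemma Q2_expand i j : \sum_l Qe i l * Qe l j =
  dlt i j * P0 i i * P0 i i - P0 i i * P0 i j ^+ 2 - P0 i j ^+ 2 * P0 j j
  + \sum_l P0 i l ^+ 2 * P0 l j ^+ 2.
Proof.
rewrite (eq_bigr (fun l => dlt i l * (dlt l j * P0 i i * P0 l l - P0 i i * P0 l j ^+ 2)
   - P0 i l ^+ 2 * dlt l j * P0 l l + P0 i l ^+ 2 * P0 l j ^+ 2)); last first.
  by move=> l _; rewrite /Qe; ring.
rewrite big_split sumrB /=.
rewrite (@sum_ev_gen i); last by move=> l hl; rewrite /dlt eq_sym (negbTE hl); ring.
rewrite (@sum_ev_gen j); last by move=> l hl; rewrite /dlt (negbTE hl); ring.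
rewrite /dlt !eqxx; ring.
Qed.

Lemma sum_qq i j : \sum_b qq i b * qq j b = (2 ^ n)%:R * Kq i j.
Proof.
rewrite (eq_bigr (fun b => lf (ev R i) b * lf (Pr i) b * lf (ev R j) b * lf (Pr j) b
  - lf (ev R i) b * lf (Pr i) b * lf (Pr j) b * lf (Pr j) b
  - lf (Pr i) b * lf (Pr i) b * lf (ev R j) b * lf (Pr j) b
  + lf (Pr i) b * lf (Pr i) b * lf (Pr j) b * lf (Pr j) b)); last by move=> b _; rewrite /qqg; ring.
rewrite big_split !sumrB /= !mom4.
rewrite ?s4_e1 ?s4_e2 ?s4_e3 ?s4_e4 ?ip_e1 ?ip_e2 ?ip_PP s4_PPPP.
rewrite /Kq Q2_expand /Qe /Pr0 /ev /dlt.
set N := (2 ^ n)%:R.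
case: (eqVneq i j) => [<-|hij].
  rewrite ?eqxx /=; ring.
rewrite ?(negbTE hij) ?(eq_sym j i) ?(negbTE hij) /= (Psym j i); ring.
Qed.

Lemma sum_tq i j : \sum_b tt i b * qq j b = 0.
Proof.
rewrite (eq_bigr (fun b => lf (Pr i) b * lf (ev R i) b * lf (Mr i) b * lf (ev R j) b * lf (Pr j) b
  - lf (Pr i) b * lf (ev R i) b * lf (Mr i) b * lf (Pr j) b * lf (Pr j) b
  - lf (Mr i) b * lf (ev R j) b * lf (Pr j) b
  + lf (Mr i) b * lf (Pr j) b * lf (Pr j) b)); last by move=> b _; rewrite /ttg /qqg; ring.
by rewrite big_split !sumrB /= !mom5 !mom3 !subrr add0r.
Qed.

Lemma sum_qt i j : \sum_b qq i b * tt j b = 0.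
Proof.
rewrite (eq_bigr (fun b => lf (ev R i) b * lf (Pr i) b * lf (Pr j) b * lf (ev R j) b * lf (Mr j) b
  - lf (ev R i) b * lf (Pr i) b * lf (Mr j) b
  - lf (Pr i) b * lf (Pr i) b * lf (Pr j) b * lf (ev R j) b * lf (Mr j) b
  + lf (Pr i) b * lf (Pr i) b * lf (Mr j) b)); last by move=> b _; rewrite /ttg /qqg; ring.
by rewrite big_split !sumrB /= !mom5 !mom3; ring.
Qed.

Lemma sum_t i : \sum_b tt i b = 0.
Proof. by rewrite /ttg sumrB mom3 mom1 subrr. Qed.

Lemma sum_q i : \sum_b qq i b = 0.
Proof. by rewrite /qqg sumrB !mom2 ip_e1 ip_PP /Pr0 subrr. Qed.

Definition Sc (c : R) (x a : 'I_n -> R) b :=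
  c * (\sum_i x i * tt i b - \sum_i a i * qq i b).

Lemma ES1 c x a : \sum_b Sc c x a b = 0.
Proof.
rewrite /Sc -mulr_sumr sumrB [X in X - _]exchange_big [X in _ - X]exchange_big /=.
rewrite !big1 ?subrr ?mulr0 // => i _; rewrite -mulr_sumr ?sum_t ?sum_q mulr0 //.
Qed.

Lemma dsum_lin (K : R) (A B : 'I_n -> 'I_n -> R) :
  \sum_i \sum_j K * (A i j + B i j) = K * (\sum_i \sum_j A i j + \sum_i \sum_j B i j).
Proof.
rewrite -big_split mulr_sumr; apply: eq_bigr => i _.
by rewrite -big_split mulr_sumr.
Qed.

Lemma ES2 c x1 a1 x2 a2 : \sum_b Sc c x1 a1 b * Sc c x2 a2 b =
  (2 ^ n)%:R * (c * c) * (\sum_i \sum_j x1 i * x2 j * Kz i j + \sum_i \sum_j a1 i * a2 j * Kq i j).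
Proof.
rewrite (eq_bigr (fun b => c * c * \sum_i \sum_j
   (x1 i * x2 j * (tt i b * tt j b) - x1 i * a2 j * (tt i b * qq j b)
    - a1 i * x2 j * (qq i b * tt j b) + a1 i * a2 j * (qq i b * qq j b)))); last first.
  move=> b _; rewrite /Sc -!sumrB mulrACA mulr_suml; f_equal.
  apply: eq_bigr => i _; rewrite mulr_sumr; apply: eq_bigr => j _; ring.
have sumG : forall i j, \sum_b (x1 i * x2 j * (tt i b * tt j b) - x1 i * a2 j * (tt i b * qq j b)
    - a1 i * x2 j * (qq i b * tt j b) + a1 i * a2 j * (qq i b * qq j b)) =
    (2 ^ n)%:R * (x1 i * x2 j * Kz i j + a1 i * a2 j * Kq i j).
  move=> i j; rewrite big_split !sumrB /= -!mulr_sumr sum_tt sum_tq sum_qt sum_qq; ring.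
rewrite -mulr_sumr exchange_big /=.
rewrite (eq_bigr (fun i => \sum_j (2 ^ n)%:R * (x1 i * x2 j * Kz i j + a1 i * a2 j * Kq i j))); last first.
  by move=> i _; rewrite exchange_big /=; apply: eq_bigr => j _; exact: sumG.
rewrite dsum_lin; ring.
Qed.
End Expect.

Set Implicit Arguments. Unset Strict Implicit. Unset Printing Implicit Defensive.
Local Open Scope ring_scope.

Section Meas.
Context d (T : measurableType d) (R : realType) (Pu : probability T R).
Local Notation integ f := (Pu.-integrable setT (fun w => (f w)%:E)).

Lemma integ_cst (k : R) : integ (fun _ => k).
Proof. exact: (finite_measure_integrable_cst _ k measurableT). Qed.

Lemma int_cst (k : R) : (\int[Pu]_w (k%:E) = k%:E)%E.
Proof.
rewrite integral_cst //.
rewrite -[RHS]mule1; congr (_ * _)%E; exact: probability_setT.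
Qed.

Lemma integD' (f g : T -> R) : integ f -> integ g -> integ (fun w => f w + g w).
Proof. by move=> hf hg; exact: (integrableD measurableT hf hg). Qed.

Lemma intD' (f g : T -> R) If Ig : integ f -> integ g ->
  (\int[Pu]_w (f w)%:E = If%:E)%E -> (\int[Pu]_w (g w)%:E = Ig%:E)%E ->
  (\int[Pu]_w (f w + g w)%:E = (If + Ig)%:E)%E.
Proof.
move=> hf hg h1 h2.
by rewrite (eq_integral (fun w => (f w)%:E + (g w)%:E)%E) // integralD // h1 h2.
Qed.

Lemma integZ' (k : R) (f : T -> R) : integ f -> integ (fun w => k * f w).
Proof. by move=> hf; exact: (integrableZl measurableT k hf). Qed.

Lemma intZ' (k : R) (f : T -> R) If : integ f ->
  (\int[Pu]_w (f w)%:E = If%:E)%E -> (\int[Pu]_w (k * f w)%:E = (k * If)%:E)%E.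
Proof.
move=> hf h.
by rewrite (eq_integral (fun w => k%:E * (f w)%:E)%E) // integralZl // h.
Qed.

Lemma integ_sum m (F : 'I_m -> T -> R) : (forall i, integ (F i)) ->
  integ (fun w => \sum_i F i w).
Proof.
elim: m F => [|m IH] F hF.
  by apply: (eq_integrable measurableT _ _ _ (integ_cst 0)) => w _; rewrite big_ord0.
apply: (eq_integrable measurableT _ _ _ (integD' (IH (fun i => F (widen_ord (leqnSn m) i)) _) (hF ord_max))) => //.
  by move=> w _; rewrite big_ord_recr.
Qed.

Lemma int_sum m (F : 'I_m -> T -> R) (I : 'I_m -> R) : (forall i, integ (F i)) ->
  (forall i, \int[Pu]_w (F i w)%:E = (I i)%:E)%E ->
  (\int[Pu]_w (\sum_i F i w)%:E = (\sum_i I i)%:E)%E.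
Proof.
elim: m F I => [|m IH] F I hF hI.
  by rewrite (eq_integral (fun _ => 0%:E)) ?int_cst ?big_ord0 // => w _; rewrite big_ord0.
rewrite (eq_integral (fun w => (\sum_(i < m) F (widen_ord (leqnSn m) i) w + F ord_max w)%:E)); last first.
  by move=> w _; rewrite big_ord_recr.
rewrite big_ord_recr; apply: intD' => //.
- exact: integ_sum.
- exact: IH.
Qed.

Lemma integ_sq (f : T -> R) : measurable_fun setT f -> integ (fun w => f w ^+ 2) -> integ f.
Proof.
move=> mf hf.
apply: (le_integrable measurableT _ _ (integD' (integ_cst 1) hf)).
  exact/measurable_EFinP.
move=> w _; rewrite !abse_EFin lee_fin.
have h1 := normr_ge0 (f w).
rewrite [X in _ <= X]ger0_norm; last by have := sqr_ge0 (f w); lra.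
rewrite -(real_normK (num_real (f w))); nra.
Qed.

Lemma integ_prod (f g : T -> R) : measurable_fun setT f -> measurable_fun setT g ->
  integ (fun w => f w ^+ 2) -> integ (fun w => g w ^+ 2) -> integ (fun w => f w * g w).
Proof.
move=> mf mg hf hg.
apply: (le_integrable measurableT _ _ (integD' hf hg)).
  by apply/measurable_EFinP; exact: measurable_funM.
move=> w _; rewrite !abse_EFin lee_fin.
have h1 := normr_ge0 (f w); have h2 := normr_ge0 (g w).
rewrite [X in _ <= X]ger0_norm; last by have := sqr_ge0 (f w); have := sqr_ge0 (g w); lra.
rewrite normrM -(real_normK (num_real (f w))) -(real_normK (num_real (g w))); nra.
Qed.
End Meas.

Set Implicit Arguments. Unset Strict Implicit. Unset Printing Implicit Defensive.
Local Open Scope ring_scope.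

Section Entries.
Variables (R : realType) (n p : nat) (eps : 'I_n -> R) (V0 P0 : 'M[R]_n).

Lemma bil (X : 'M[R]_n) (y1 y2 : 'cV[R]_n) :
  (y1^T *m X *m y2) 0 0 = \sum_i \sum_j y1 i 0 * X i j * y2 j 0.
Proof.
rewrite mxE exchange_big /=; apply: eq_bigr => j _.
rewrite mxE mulr_suml; apply: eq_bigr => i _; by rewrite mxE.
Qed.

Lemma DmatE (A : 'M[R]_n) i j : Dmat A i j = if i == j then A i i else 0.
Proof. by rewrite /Dmat !mxE; case: eqP => [->|]. Qed.

Lemma subDmat (A : 'M[R]_n) : 1%:M - Dmat A = Dvec (fun i => 1 - A i i).
Proof. by apply/matrixP => i j; rewrite /Dvec /Dmat !mxE; case: eqP => _; rewrite ?mulr1n ?mulr0n ?subr0. Qed.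
Lemma subDmat2 (A : 'M[R]_n) : 1%:M - 2%:R *: Dmat A = Dvec (fun i => 1 - 2%:R * A i i).
Proof. by apply/matrixP => i j; rewrite /Dvec /Dmat !mxE; case: eqP => _; rewrite ?mulr1n ?mulr0n ?mulr0 ?subr0. Qed.
Lemma DmatDvec (A : 'M[R]_n) : Dmat A = Dvec (fun i => A i i).
Proof. by []. Qed.

Lemma addE (A B : 'M[R]_n) i j : (A + B) i j = A i j + B i j.
Proof. by rewrite mxE. Qed.
Lemma subE (A B : 'M[R]_n) i j : (A - B) i j = A i j - B i j.
Proof. by rewrite !mxE. Qed.
Lemma hadmE (A B : 'M[R]_n) i j : hadm A B i j = A i j * B i j.
Proof. by rewrite mxE. Qed.
Lemma DvecE' (v : 'I_n -> R) i j : Dvec v i j = if i == j then v i else 0.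
Proof. by rewrite /Dvec !mxE; case: eqP. Qed.

Lemma ML_entry i j :
  ((1%:M - Dmat P0) *m V0 *m (1%:M - Dmat P0) + Dmat P0 *m Dmat V0 *m (1%:M - 2%:R *: Dmat P0)
      + hadm (hadm V0 P0) P0) i j = MLe V0 P0 i j.
Proof.
rewrite subDmat subDmat2 !DmatDvec !addE !hadmE !mulDvecE !Dvec_mulE.
rewrite /MLe DvecE'; case: eqP => [->|_] /=; ring.
Qed.

Lemma Q_entry i j : (Dmat P0 - hadm P0 P0) i j = Qe P0 i j.
Proof. by rewrite subE hadmE DmatE /Qe /dlt; case: eqP => [->|_]; ring. Qed.

Lemma QQ_entry i j : ((Dmat P0 - hadm P0 P0) *m (Dmat P0 - hadm P0 P0)) i j =
  \sum_l Qe P0 i l * Qe P0 l j.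
Proof. by rewrite mxE; apply: eq_bigr => l _; rewrite !Q_entry. Qed.

Lemma trace_diag (v : 'I_n -> R) (X : 'M[R]_n) : \tr (Dvec v *m X) = \sum_i v i * X i i.
Proof. by rewrite /mxtrace; apply: eq_bigr => i _; rewrite Dvec_mulE. Qed.

Lemma tr_Lu (SigU : 'I_n -> 'M[R]_p) l1 l2 :
  \tr (DSigU SigU l1 l2 *m Dmat V0 *m (1%:M - Dmat P0)) =
  \sum_i SigU i l1 l2 * (V0 i i * (1 - P0 i i)).
Proof.
rewrite /DSigU -mulmxA trace_diag; apply: eq_bigr => i _.
by rewrite subDmat DmatDvec Dvec_mulE DvecE' eqxx.
Qed.

Lemma tr_Hu (SigU : 'I_n -> 'M[R]_p) l1 l2 :
  \tr (DSigU SigU l1 l2 *m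
      (Dmat V0 *m Dmat P0 *m (1%:M - 2%:R *: Dmat P0)
       + hadm (hadm (V0 *m Dvec eps) (V0 *m Dvec eps) *m hadm P0 P0) 1%:M)) =
  \sum_i SigU i l1 l2 * (V0 i i * P0 i i * (1 - 2%:R * P0 i i)
      + \sum_m (V0 i m * eps m) ^+ 2 * P0 m i ^+ 2).
Proof.
rewrite /DSigU trace_diag; apply: eq_bigr => i _; congr (_ * _).
rewrite subDmat2 !DmatDvec addE hadmE !mulDvecE DvecE' eqxx [1%:M i i]mxE eqxx mulr1n mulr1.
congr (_ + _).
rewrite mxE; apply: eq_bigr => m _; rewrite !hadmE !mulDvecE; ring.
Qed.
End Entries.

Section Main.
Variables (R : realType) (n k p : nat) (Z : 'M[R]_(n, k)) (eps : 'I_n -> R).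
Variables (Pi : 'M[R]_(k, p)) (a : 'M[R]_(n, p)).
Hypothesis hA : Z^T *m (Dvec eps *m Dvec eps) *m Z \in unitmx.
Local Notation V := (Vmat Z eps).
Local Notation P := (Pmat Z eps).

Lemma Psym_i i j : P i j = P j i.
Proof. by rewrite !Pentry Vsym; ring. Qed.

Lemma colDE (A B : 'M[R]_(n, p)) l :
  (fun i => (col l A + col l B) i 0) = (fun i => A i l + B i l).
Proof. by apply: funext => i; rewrite !mxE. Qed.

Lemma scoreR_Sc (U : 'M[R]_(n, p)) l b :
  scoreR Z eps Pi a U l b =
  Sc eps V P (n%:R^-1) (fun i => (Z *m Pi) i l + U i l) (fun i => a i l) b.
Proof.
rewrite -colDE /scoreR /Sc.
exact: (score_gen eps V Psym_i).
Qed.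

Lemma ER1 (U : 'M[R]_(n, p)) l : Er (fun b => scoreR Z eps Pi a U l b) = 0.
Proof.
rewrite /Er (eq_bigr _ (fun b _ => scoreR_Sc U l b)).
by rewrite ES1 ?mulr0 // => [i j|i j]; [exact: VDV_e | exact: Pentry].
Qed.

Lemma ER2 (U : 'M[R]_(n, p)) l1 l2 :
  n%:R * Er (fun b => scoreR Z eps Pi a U l1 b * scoreR Z eps Pi a U l2 b) =
  n%:R^-1 * (\sum_i \sum_j ((Z *m Pi) i l1 + U i l1) * ((Z *m Pi) j l2 + U j l2) * Kz eps V P i j
            + \sum_i \sum_j a i l1 * a j l2 * Kq P i j).
Proof.
rewrite /Er (eq_bigr _ (fun b _ => congr2 (fun x y => x * y) (scoreR_Sc U l1 b) (scoreR_Sc U l2 b))).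
rewrite ES2 => [||i j|i j]; last first.
- exact: Pentry.
- exact: VDV_e.
- exact: Vsym.
rewrite card_ffun card_bool card_ord.
set X := (_ + _).
have N0 : (2 ^ n)%:R != 0 :> R by rewrite pnatr_eq0 expn_eq0.
have key : forall (N c' Y : R), N != 0 -> N^-1 * (N * (c' * c') * Y) = c' * c' * Y.
  by move=> N c' Y hN; field.
rewrite key //.
have [n0|n0] := eqVneq (n%:R : R) 0; first by rewrite n0 invr0 !mul0r.
by rewrite !mulrA mulfV ?mul1r.
Qed.

Lemma bilE (A : 'M[R]_(n, p)) l1 l2 (X : 'M[R]_n) (K : 'I_n -> 'I_n -> R) :
  (forall i j, X i j = K i j) ->
  ((col l1 A)^T *m X *m col l2 A) 0 0 = \sum_i \sum_j A i l1 * K i j * A j l2.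
Proof.
move=> hX; rewrite bil; apply: eq_bigr => i _; apply: eq_bigr => j _.
by rewrite hX !mxE.
Qed.

Lemma dsum_comb (c d e : R) (F G H : 'I_n -> 'I_n -> R) :
  (forall i j, c * F i j + d * G i j = e * H i j) ->
  c * (\sum_i \sum_j F i j) + d * (\sum_i \sum_j G i j) = e * (\sum_i \sum_j H i j).
Proof.
move=> h; rewrite !mulr_sumr -big_split; apply: eq_bigr => i _ /=.
by rewrite !mulr_sumr -big_split; apply: eq_bigr => j _ /=; exact: h.
Qed.

Lemma sum_comb (c d e : R) (F G H : 'I_n -> R) :
  (forall i, c * F i + d * G i = e * H i) ->
  c * (\sum_i F i) + d * (\sum_i G i) = e * (\sum_i H i).
Proof. by move=> h; rewrite !mulr_sumr -big_split; apply: eq_bigr => i _ /=; exact: h. Qed.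

Lemma VW_entry i j : VWmat Z eps i j = VWe eps V P i j.
Proof. by rewrite /VWmat mxE. Qed.

Lemma omega_eq (SigU : 'I_n -> 'M[R]_p) l1 l2 :
  OmegaL Z eps Pi a SigU l1 l2 + OmegaH Z eps Pi a SigU l1 l2 =
  n%:R^-1 * (\sum_i \sum_j ((Z *m Pi) i l1 * (Z *m Pi) j l2
                            + (if i == j then SigU i l1 l2 else 0)) * Kz eps V P i j
            + \sum_i \sum_j a i l1 * a j l2 * Kq P i j).
Proof.
rewrite /OmegaL /OmegaH /OmegaLz /OmegaHz /OmegaLa /OmegaHa /OmegaLu /OmegaHu /=.
rewrite (bilE _ _ _ (ML_entry V P)) (bilE _ _ _ VW_entry) (bilE _ _ _ (Q_entry P)).
rewrite (bilE _ _ _ (QQ_entry P)) tr_Lu tr_Hu.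
set c := n%:R^-1.
have e1 : \sum_i \sum_j ((Z *m Pi) i l1 * (Z *m Pi) j l2
             + (if i == j then SigU i l1 l2 else 0)) * Kz eps V P i j =
   \sum_i \sum_j (Z *m Pi) i l1 * (Z *m Pi) j l2 * Kz eps V P i j
   + \sum_i SigU i l1 l2 * Kz eps V P i i.
  rewrite -big_split; apply: eq_bigr => i _ /=.
  rewrite (eq_bigr (fun j => (Z *m Pi) i l1 * (Z *m Pi) j l2 * Kz eps V P i j
       + (if i == j then SigU i l1 l2 * Kz eps V P i i else 0))); last first.
    by move=> j _; case: eqP => [<-|_] /=; ring.
  rewrite big_split /=; congr (_ + _).
  rewrite (bigD1 i) //= eqxx big1 ?addr0 // => j /negbTE hj.
  by rewrite eq_sym hj.
have hz : c * (\sum_i \sum_j (Z *m Pi) i l1 * MLe V P i j * (Z *m Pi) j l2)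
   + c * (\sum_i \sum_j (Z *m Pi) i l1 * VWe eps V P i j * (Z *m Pi) j l2)
   = c * (\sum_i \sum_j (Z *m Pi) i l1 * (Z *m Pi) j l2 * Kz eps V P i j).
  by apply: dsum_comb => i j; rewrite /Kz; ring.
have ha : c * (\sum_i \sum_j a i l1 * Qe P i j * a j l2)
   + (- (2 * c)) * (\sum_i \sum_j a i l1 * (\sum_l Qe P i l * Qe P l j) * a j l2)
   = c * (\sum_i \sum_j a i l1 * a j l2 * Kq P i j).
  by apply: dsum_comb => i j; rewrite /Kq /c; ring.
have hu : c * (\sum_i SigU i l1 l2 * (V i i * (1 - P i i)))
   + (- (2 * c)) * (\sum_i SigU i l1 l2 * (V i i * P i i * (1 - 2%:R * P i i)
      + \sum_m (V i m * eps m) ^+ 2 * P m i ^+ 2))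
   = c * (\sum_i SigU i l1 l2 * Kz eps V P i i).
  apply: sum_comb => i; rewrite /Kz /MLe /VWe eqxx /=.
  rewrite (eq_bigr (fun m => V i m ^+ 2 * eps m ^+ 2 * P i m ^+ 2)) => [|m _]; last first.
    by rewrite (Psym_i m i); ring.
  rewrite /c; ring.
rewrite e1 mulrDr mulrDr.
lra.
Qed.
End Main.

Section Quad.
Context d (T : measurableType d) (R : realType) (Pu : probability T R).
Local Notation integ f := (Pu.-integrable setT (fun w => (f w)%:E)).

Lemma integ_quad (f g : T -> R) (z1 z2 K : R) : integ f -> integ g ->
  integ (fun w => f w * g w) -> integ (fun w => (z1 + f w) * (z2 + g w) * K).
Proof.
move=> hf hg hfg.
have h := integD' (integD' (integD' (integ_cst Pu (z1 * z2 * K)) (integZ' (z1 * K) hg))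
                   (integZ' (z2 * K) hf)) (integZ' K hfg).
apply: (eq_integrable measurableT _ _ _ h) => w _ /=; congr (_%:E); ring.
Qed.

Lemma int_quad (f g : T -> R) (z1 z2 K Ifg : R) : integ f -> integ g ->
  integ (fun w => f w * g w) ->
  (\int[Pu]_w (f w)%:E = 0)%E -> (\int[Pu]_w (g w)%:E = 0)%E ->
  (\int[Pu]_w (f w * g w)%:E = Ifg%:E)%E ->
  (\int[Pu]_w ((z1 + f w) * (z2 + g w) * K)%:E = ((z1 * z2 + Ifg) * K)%:E)%E.
Proof.
move=> hf hg hfg i1 i2 i3.
have j1 := integ_cst Pu (z1 * z2 * K).
have j2 := integZ' (z1 * K) hg.
have j3 := integZ' (z2 * K) hf.
have j4 := integZ' K hfg.
have k1 := intD' j1 j2 (int_cst Pu _) (intZ' (z1 * K) (If := 0) hg i2).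
have k2 := intD' (integD' j1 j2) j3 k1 (intZ' (z2 * K) (If := 0) hf i1).
have k3 := intD' (integD' (integD' j1 j2) j3) j4 k2 (intZ' K hfg i3).
rewrite (eq_integral (fun w => (z1 * z2 * K + z1 * K * g w + z2 * K * f w + K * (f w * g w))%:E)); last first.
  by move=> w _; congr (_%:E); ring.
by rewrite k3; congr (_%:E); ring.
Qed.
End Quad.

Unset Implicit Arguments. Set Strict Implicit.
Theorem lemma2 (R : realType) (d : measure_display) (T : measurableType d)
  (Pu : probability T R) (n k p : nat)
  (Z : 'M[R]_(n, k)) (eps : 'I_n -> R) (Pi : 'M[R]_(k, p))
  (a : 'M[R]_(n, p)) (SigU : 'I_n -> 'M[R]_p)
  (u : 'I_n -> 'I_p -> T -> R) :
  Z^T *m (Dvec eps *m Dvec eps) *m Z \in unitmx ->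
  (forall i l, measurable_fun setT (u i l)) ->
  (forall i l, Pu.-integrable setT (fun w => ((u i l w) ^+ 2)%:E)) ->
  (forall i l, (\int[Pu]_w (u i l w)%:E = 0)%E) ->
  (forall i j l m, (\int[Pu]_w (u i l w * u j m w)%:E
                   = (if i == j then SigU i l m else 0)%:E)%E) ->
  let U w : 'M[R]_(n, p) := \matrix_(i, l) u i l w in
  (forall l : 'I_p,
     (\int[Pu]_w (Er (fun b => scoreR Z eps Pi a (U w) l b))%:E = 0)%E) /\
  (forall l1 l2 : 'I_p,
     (\int[Pu]_w (n%:R * Er (fun b => scoreR Z eps Pi a (U w) l1 b
                                     * scoreR Z eps Pi a (U w) l2 b))%:E
     = (OmegaL Z eps Pi a SigU l1 l2 + OmegaH Z eps Pi a SigU l1 l2)%:E)%E).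
Proof.
move=> hA hmu hu2 hu0 huu U; split.
  move=> l; rewrite (eq_integral (fun _ => (0:R)%:E)); first exact: int_cst.
  by move=> w _; rewrite ER1.
move=> l1 l2.
rewrite (eq_integral (fun w => (n%:R^-1 * (\sum_i \sum_j ((Z *m Pi) i l1 + u i l1 w)
   * ((Z *m Pi) j l2 + u j l2 w) * Kz eps (Vmat Z eps) (Pmat Z eps) i j
   + \sum_i \sum_j a i l1 * a j l2 * Kq (Pmat Z eps) i j))%:E)); last first.
  move=> w _; rewrite ER2 //; congr (_%:E); congr (_ * (_ + _)).
  by apply: eq_bigr => i _; apply: eq_bigr => j _; rewrite /U !mxE.
rewrite omega_eq.
have hi : forall i l, Pu.-integrable setT (fun w => (u i l w)%:E).
  by move=> i l; apply: integ_sq; [exact: hmu | exact: hu2].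
have hp : forall i j l m, Pu.-integrable setT (fun w => (u i l w * u j m w)%:E).
  by move=> i j l m; apply: integ_prod; [exact: hmu | exact: hmu | exact: hu2 | exact: hu2].
apply: intZ'.
  apply: integD'; last exact: integ_cst.
  apply: integ_sum => i; apply: integ_sum => j.
  by apply: integ_quad; [exact: hi | exact: hi | exact: hp].
apply: intD'; last exact: int_cst.
- apply: integ_sum => i; apply: integ_sum => j.
  by apply: integ_quad; [exact: hi | exact: hi | exact: hp].
- exact: integ_cst.
apply: int_sum => i.
  apply: integ_sum => j.
  by apply: integ_quad; [exact: hi | exact: hi | exact: hp].
apply: int_sum => j.
  by apply: integ_quad; [exact: hi | exact: hi | exact: hp].
apply: int_quad; [exact: hi | exact: hi | exact: hp | exact: hu0 | exact: hu0 | exact: huu].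
Qed.
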